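(* Let $G$ be a signed digraph with vertex set $V$, $f$ a Boolean network on $G$, $i\in V$ and $a\in\{0,1\}$. Let $w$ be a canalizing word from $(i,a)$ with image $b$, and suppose no source of $G$ belongs to $\{w\}$. Then for every $j\in\{w\}$, $G$ has a path from $i$ to $j$ whose internal vertices are in $\{w\}$, which is positive if $a=b_j$ and negative otherwise.
   Context: A signed digraph on $V$ is $(V,E)$ with $E\subseteq V\times V\times\{-1,1\}$. Paths have no repeated vertices and are signed by the product of arc signs. A source is a vertex of in-degree zero. A Boolean network (BN) is $f:\{0,1\}^V\to\{0,1\}^V$; its signed interaction digraph has a positive (negative) arc from $j$ to $k$ iff for some $x$ with $x_j=0$, $f_k(x+e_j)-f_k(x)$ is positive (negative). A BN on $G$ is one whose signed interaction digraph is $G$. $f^k(x)$ is $x$ with $x_k$ replaced by $f_k(x)$; $f^{i_1\cdots i_\ell}=f^{i_\ell}\circ\cdots\circ f^{i_1}$; $\{w\}$ is the set of letters of $w$. A canalizing word from $(i,a)$ is a word $w$ over $V\setminus\{i\}$ without repeated letters such that for some configuration $b$ on $\{w\}$ (called the image of $w$), every $x\in\{0,1\}^V$ with $x_i=a$ satisfies $f^w(x)_{\{w\}}=b$. *)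

(* Defs.v *)
From mathcomp Require Import all_boot.
Set Implicit Arguments. Unset Strict Implicit. Unset Printing Implicit Defensive.

(* Signs {-1,1} are encoded as bool: true = +1 (positive), false = -1 (negative).
   A signed digraph on the finite vertex type V is its arc set
   E : {set V * V * bool}. *)

Definition config (V : finType) := {ffun V -> bool}.

Definition upd (V : finType) (x : config V) (j : V) (c : bool) : config V :=
  [ffun k => if k == j then c else x k].

Definition pos_arc (V : finType) (f : config V -> config V) (j k : V) : Prop :=
  exists x : config V, x j = false /\ f x k = false /\ f (upd x j true) k = true.
Definition neg_arc (V : finType) (f : config V -> config V) (j k : V) : Prop :=
  exists x : config V, x j = false /\ f x k = true /\ f (upd x j true) k = false.

Definition BN_on (V : finType) (E : {set V * V * bool}) (f : config V -> config V) : Prop :=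
  forall j k s, (j, k, s) \in E <-> (if s then pos_arc f j k else neg_arc f j k).

Definition is_source (V : finType) (E : {set V * V * bool}) (v : V) : Prop :=
  forall u s, (u, v, s) \notin E.

(* f^k and f^w (letters applied left to right: f^{i1..il} = f^{il} o ... o f^{i1}) *)
Definition fk (V : finType) (f : config V -> config V) (k : V) (x : config V) : config V :=
  upd x k (f x k).
Definition fw (V : finType) (f : config V -> config V) (w : seq V) (x : config V) : config V :=
  foldl (fun y k => fk f k y) x w.

(* w is a canalizing word from (i,a) whose image is b (b only matters on {w}) *)
Definition canalizing_with_image (V : finType) (f : config V -> config V)
    (i : V) (a : bool) (w : seq V) (b : V -> bool) : Prop :=
  uniq w /\ i \notin w /\
  forall x : config V, x i = a -> forall j, j \in w -> fw f w x j = b j.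

(* A path from u: list of steps (next vertex, sign of the arc used). *)
Fixpoint walk (V : finType) (E : {set V * V * bool}) (u : V) (p : seq (V * bool)) : bool :=
  if p is (v, s) :: q then ((u, v, s) \in E) && walk E v q else true.

Definition path_sign (V : finType) (p : seq (V * bool)) : bool :=
  foldr (fun e acc => if e.2 then acc else ~~ acc) true p.

Definition is_path (V : finType) (E : {set V * V * bool}) (u v : V) (p : seq (V * bool)) : Prop :=
  [/\ walk E u p, uniq (u :: map fst p) & last u (map fst p) = v].

Definition internal (V : finType) (u : V) (p : seq (V * bool)) : seq V :=
  behead (belast u (map fst p)).

(* Main.v *)
Require Import Defs.
From mathcomp Require Import all_boot.

Section Aux.
Variable V : finType.
Implicit Types (x z : config V) (f : config V -> config V).

Lemma updE x j c k : upd x j c k = if k == j then c else x k.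
Proof. by rewrite /upd ffunE. Qed.

Lemma upd_id x j : upd x j (x j) = x.
Proof. by apply/ffunP => k; rewrite updE; case: eqP => // ->. Qed.

Lemma upd_upd x j c d : upd (upd x j c) j d = upd x j d.
Proof. by apply/ffunP => k; rewrite !updE; case: eqP. Qed.

Lemma fw_notin f s x j : j \notin s -> fw f s x j = x j.
Proof.
elim: s x => [|v s IH] x //=; rewrite in_cons negb_or => /andP [Hjv Hjs].
rewrite /fw /= -/(fw f s (fk f v x)) IH // /fk updE (negbTE Hjv) //.
Qed.

Lemma fw_rcons f s v x : fw f (rcons s v) x = fk f v (fw f s x).
Proof. by rewrite /fw foldl_rcons. Qed.

Lemma fw_cat f s1 s2 x : fw f (s1 ++ s2) x = fw f s2 (fw f s1 x).
Proof. by rewrite /fw foldl_cat. Qed.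

Lemma flip (g : config V -> bool) (t : V -> bool) (c : bool) (S : seq V) :
  forall T, (forall z : config V, (forall v, v \in S ++ T -> z v = t v) -> g z = c) ->
  forall z0, g z0 = ~~ c -> (forall v, v \in T -> z0 v = t v) ->
  exists u z, u \in S /\ g z = ~~ c /\ g (upd z u (t u)) = c.
Proof.
elim: S => [|u S IH] T Hg z0 Hz0 HT.
  by rewrite (Hg z0 HT) in Hz0; destruct c.
case Hz1: (g (upd z0 u (t u)) == c).
  by exists u, z0; split; [rewrite mem_head | split => //; apply/eqP].
have [|||u' [z [Hu' Hz]]] := IH (u :: T) _ (upd z0 u (t u)).
- move=> z Hz; apply: Hg => v Hv; apply: Hz; move: Hv.
  rewrite /= !in_cons !mem_cat in_cons.
  by case: (v == u); case: (v \in S); case: (v \in T).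
- by move/negbT: Hz1; case: (g _); destruct c.
- move=> v; rewrite in_cons updE; case: (v =P u) => [-> //|_ /= HvT]; exact: HT.
- by exists u', z; split => //; rewrite in_cons Hu' orbT.
Qed.

Lemma arc_of (E : {set V * V * bool}) f (Hbn : BN_on E f) j u z t c :
  f z j = ~~ c -> f (upd z u t) j = c -> (u, j, (t == c)) \in E.
Proof.
move=> H1 H2.
have Hzu : z u = ~~ t.
  case E1: (z u == t).
    by move/eqP: E1 => E1; rewrite -E1 upd_id H1 in H2; destruct c.
  by move: E1; case: (z u); destruct t.
apply/Hbn; case: t Hzu H2 => /= Hzu H2.
- have Hx : z = upd z u false by rewrite -Hzu upd_id.
  by case: c H1 H2 => H1 H2 /=; exists z; rewrite Hzu; split => //.
- have Hx : upd (upd z u false) u true = z by rewrite upd_upd -Hzu upd_id.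
  case: c H1 H2 => H1 H2 /=; exists (upd z u false);
    by rewrite Hx updE eqxx H1 H2.
Qed.

Lemma path_sign_rcons (p : seq (V * bool)) v s :
  path_sign (rcons p (v, s)) = (path_sign p == s).
Proof.
elim: p => [|[v' s'] p IH] /=; first by destruct s.
by rewrite IH; case: s'; case: (path_sign p); destruct s.
Qed.

Lemma walk_rcons (E : {set V * V * bool}) (y : V) (p : seq (V * bool)) (v : V) s :
  walk E y (rcons p (v, s)) = walk E y p && ((last y (map fst p), v, s) \in E).
Proof.
elim: p y => [|[v' s'] p IH] y /=; first by rewrite andbT.
by rewrite IH andbA.
Qed.

End Aux.

Theorem lemma6 (V : finType) (E : {set V * V * bool}) (f : config V -> config V)
  (i : V) (a : bool) (w : seq V) (b : V -> bool) :
  BN_on E f ->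
  canalizing_with_image f i a w b ->
  (forall v, v \in w -> ~ is_source E v) ->
  forall j, j \in w ->
    exists p : seq (V * bool),
      is_path E i j p /\
      (forall v, v \in internal i p -> v \in w) /\
      path_sign p = (a == b j).
Proof.
move=> Hbn [Huniq [Hiw Hcan]] Hsrc.
have HA : forall k (x : config V), k < size w -> x i = a ->
    f (fw f (take k w) x) (nth i w k) = b (nth i w k).
  move=> k x Hk Hx.
  have Hjw : nth i w k \in w := mem_nth i Hk.
  have Hu := Huniq.
  rewrite -[w](cat_take_drop k) (drop_nth i Hk) cat_uniq /= in Hu.
  case/and4P: Hu => _ _ Hnd _.
  rewrite -(Hcan x Hx _ Hjw).
  rewrite -{3}[w](cat_take_drop k) (drop_nth i Hk) fw_cat /fw /=.
  rewrite -/(fw f (drop k.+1 w) _) fw_notin // /fk updE eqxx //.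
have HB : forall k, k <= size w -> forall z : config V, z i = a ->
    (forall v, v \in take k w -> z v = b v) -> fw f (take k w) z = z.
  elim=> [|k IH] Hk z Hz Hzb; first by rewrite take0.
  have Hk' : k < size w by [].
  rewrite (take_nth i Hk') fw_rcons IH //; last first.
    by move=> v Hv; apply: Hzb; rewrite (take_nth i Hk') mem_rcons in_cons Hv orbT.
    exact: ltnW.
  have := HA k z Hk' Hz; rewrite IH //; last first.
    by move=> v Hv; apply: Hzb; rewrite (take_nth i Hk') mem_rcons in_cons Hv orbT.
    exact: ltnW.
  move=> H; rewrite /fk H -Hzb ?upd_id //.
  by rewrite (take_nth i Hk') mem_rcons mem_head.
have HC : forall k (z : config V), k < size w -> z i = a ->
    (forall v, v \in take k w -> z v = b v) -> f z (nth i w k) = b (nth i w k).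
  move=> k z Hk Hz Hzb.
  by have := HA k z Hk Hz; rewrite HB // ltnW.
pose t := fun v => if v == i then a else b v.
have P : forall k, k < size w -> exists q s,
    is_path E i (nth i w k) (rcons q (nth i w k, s)) /\
    {subset map fst q <= take k w} /\
    path_sign (rcons q (nth i w k, s)) = (a == b (nth i w k)).
  elim/ltn_ind => k IH Hk.
  set j := nth i w k.
  have Hjw : j \in w := mem_nth i Hk.
  have Hji : j != i by apply/eqP => Hji; rewrite -Hji Hjw in Hiw.
  have Hjt : j \notin take k w by rewrite in_take // index_uniq // ltnn.
  have [z0 Hz0] : exists z0, f z0 j = ~~ b j.
    have : [exists u : V, exists s : bool, (u, j, s) \in E].
      case Hex: [exists u : V, exists s : bool, (u, j, s) \in E] => //.
      exfalso; apply: (Hsrc j Hjw) => u s; apply/negP => Hin.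
      have : [exists u : V, exists s : bool, (u, j, s) \in E].
        by apply/existsP; exists u; apply/existsP; exists s.
      by rewrite Hex.
    case/existsP => u /existsP [s Hin].
    case: s Hin => /Hbn [x [_ [H1 H2]]].
      by case Hb: (b j); [exists x; rewrite H1 | exists (upd x u true); rewrite H2].
    by case Hb: (b j); [exists (upd x u true); rewrite H2 | exists x; rewrite H1].
  have [||u [z [Hu [Hz1 Hz2]]]] :=
    @flip V (fun z => f z j) t (b j) (i :: take k w) [::] _ z0 Hz0.
  - move=> z Hz; apply: HC => //.
      by have := Hz i; rewrite cats0 mem_head /t eqxx => ->.
    move=> v Hv; have := Hz v; rewrite cats0 in_cons Hv orbT /t => -> //.
    by case: (v =P i) => // Hvi; rewrite -Hvi (mem_take Hv) in Hiw.
  - by [].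
  have Harc := @arc_of V E f Hbn _ _ _ _ _ Hz1 Hz2.
  case: (u =P i) Hu Harc => [-> _ | Hui].
    rewrite /t eqxx => Harc.
    exists [::], (a == b j); split; last split => //.
      split => //=; first by rewrite Harc.
      by rewrite in_cons in_nil orbF eq_sym Hji.
    by case: (a == b j).
  rewrite in_cons => /orP [/eqP //|Hut].
  rewrite /t; move/eqP/negbTE: Hui => Hui; rewrite Hui => Harc.
  have Huw : u \in w := mem_take Hut.
  have Hm : index u w < k := index_ltn Hut.
  have [q' [s' [[Hw' Hu' Hl'] [Hsub' Hsg']]]] := IH _ Hm (ltn_trans Hm Hk).
  rewrite nth_index // in Hw' Hu' Hl' Hsg'.
  have Hsub'' : {subset map fst q' <= take k w}.
    move=> v Hv; have Hv' := Hsub' v Hv.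
    have Hvw := mem_take Hv'.
    rewrite in_take // in Hv' *; rewrite in_take //; exact: (ltn_trans Hv' Hm).
  exists (rcons q' (u, s')), (b u == b j); split; last split.
  - split.
    + by rewrite walk_rcons Hw' Hl' Harc.
    + rewrite map_rcons -rcons_cons rcons_uniq Hu' andbT in_cons negb_or Hji /=.
      rewrite map_rcons mem_rcons in_cons negb_or; apply/andP; split.
        by apply/eqP => Hju; rewrite Hju Hut in Hjt.
      by apply/negP => /Hsub'' Hj; rewrite Hj in Hjt.
    + by rewrite map_rcons last_rcons.
  - move=> v; rewrite map_rcons mem_rcons in_cons => /orP [/eqP -> //|/Hsub''] //.
  - by rewrite path_sign_rcons Hsg'; case: (b u); case: (b j); destruct a.
move=> j Hj.
have Hk : index j w < size w by rewrite index_mem.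
have [q [s [Hp [Hsub Hsg]]]] := P _ Hk.
rewrite nth_index // in Hp Hsg.
exists (rcons q (j, s)); split => //; split => //.
move=> v; rewrite /internal map_rcons belast_rcons /= => /Hsub; exact: mem_take.
Qed.
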